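(* Let $c_v>\frac12$, let $\varrho_\pm,p_\pm>0$, $v_\pm\in\mathbb{R}$ be Riemann data (for the one-dimensional full Euler system in the variable $x_2$, with states $(\varrho_-,v_-,p_-)$ for $x_2<0$ and $(\varrho_+,v_+,p_+)$ for $x_2>0$) whose 1D Riemann solution consists of a 1-shock, possibly a 2-contact discontinuity, and a 3-shock, with intermediate states $(\varrho_{M-},v_M,p_M)$, $(\varrho_{M+},v_M,p_M)$ and shock speeds $\sigma_-,\sigma_+$, and assume $v_M=0$. Define for $\varepsilon\in\mathbb{R}$ $A(\varepsilon)=\varrho_-(\varrho_{M-}+\varepsilon)(\varrho_{M+}-\varepsilon-\varrho_+)-\varrho_+(\varrho_{M+}-\varepsilon)(\varrho_{M-}+\varepsilon-\varrho_-)$, $B(\varepsilon)=\varrho_-\varrho_+(\varrho_{M-}+\varepsilon)(\varrho_{M+}-\varepsilon)(v_--v_+)^2-(p_--p_+)A(\varepsilon)$, $D(\varepsilon)=v_-\varrho_-(\varrho_{M-}+\varepsilon)(\varrho_{M+}-\varepsilon-\varrho_+)-v_+\varrho_+(\varrho_{M+}-\varepsilon)(\varrho_{M-}+\varepsilon-\varrho_-)$, let $\varepsilon_{\max}>0$ be such that $A(\varepsilon)\ne0$, $B(\varepsilon)>0$, $\varrho_{M+}-\varepsilon-\varrho_+>0$ and $\varrho_{M-}+\varepsilon-\varrho_->0$ for all $\varepsilon\in(0,\varepsilon_{\max}]$, and for $\varepsilon\in(0,\varepsilon_{\max}]$ define $\mu_0(\varepsilon)=\frac{1}{A(\varepsilon)}\Big[D(\varepsilon)+\varrho_-\varrho_+(\varrho_{M+}-\varepsilon)(v_--v_+)-\sqrt{(\varrho_{M-}+\varepsilon)^2\frac{\varrho_{M+}-\varepsilon-\varrho_+}{\varrho_{M-}+\varepsilon-\varrho_-}B(\varepsilon)}\Big]$,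 $\mu_1(\varepsilon)=\frac{1}{A(\varepsilon)}\Big[D(\varepsilon)-\sqrt{(\varrho_{M-}+\varepsilon-\varrho_-)(\varrho_{M+}-\varepsilon-\varrho_+)B(\varepsilon)}\Big]$, $\mu_2(\varepsilon)=\frac{1}{A(\varepsilon)}\Big[D(\varepsilon)+\varrho_-\varrho_+(\varrho_{M-}+\varepsilon)(v_--v_+)-\sqrt{(\varrho_{M+}-\varepsilon)^2\frac{\varrho_{M-}+\varepsilon-\varrho_-}{\varrho_{M+}-\varepsilon-\varrho_+}B(\varepsilon)}\Big]$. Then $\lim_{\varepsilon\to0}\mu_0(\varepsilon)=\sigma_-$, $\lim_{\varepsilon\to0}\mu_1(\varepsilon)=v_M$ and $\lim_{\varepsilon\to0}\mu_2(\varepsilon)=\sigma_+$.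
   Context: The one-dimensional full Euler system for an ideal gas is $\partial_t\varrho+\partial_2(\varrho v)=0$, $\partial_t(\varrho v)+\partial_2(\varrho v^2+p)=0$, $\partial_t(\frac12\varrho v^2+c_vp)+\partial_2[(\frac12\varrho v^2+(c_v+1)p)v]=0$. The 1D Riemann solution is its unique self-similar BV solution with the given Riemann data, consisting of a 1-wave, a (possibly absent) 2-contact discontinuity traveling with speed $v_M$, and a 3-wave, separated by constant states. In the case considered the 1-wave is an admissible shock connecting $(\varrho_-,v_-,p_-)$ to $(\varrho_{M-},v_M,p_M)$ with speed $\sigma_-$, and the 3-wave an admissible shock connecting $(\varrho_{M+},v_M,p_M)$ to $(\varrho_+,v_+,p_+)$ with speed $\sigma_+$; the Rankine–Hugoniot conditions hold, in particular $\sigma_\pm(\varrho_\pm-\varrho_{M\pm})=\varrho_\pm v_\pm-\varrho_{M\pm}v_M$. It is known that $p_M>\max\{p_-,p_+\}$, $\varrho_{M\pm}>\varrho_\pm$. The paper shows such an $\varepsilon_{\max}$ exists. *)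

(* Defs.v *)
From Stdlib Require Import Reals Lra.
From Coquelicot Require Import Coquelicot.
Open Scope R_scope.

Definition gamma_cv (cv : R) : R := (cv + 1) / cv.
Definition sound (cv rho p : R) : R := sqrt (gamma_cv cv * p / rho).

Definition cons_mass (rho v p : R) : R := rho.
Definition cons_mom (rho v p : R) : R := rho * v.
Definition cons_en (cv rho v p : R) : R := /2 * rho * v ^ 2 + cv * p.
Definition flux_mass (rho v p : R) : R := rho * v.
Definition flux_mom (rho v p : R) : R := rho * v ^ 2 + p.
Definition flux_en (cv rho v p : R) : R := (/2 * rho * v ^ 2 + (cv + 1) * p) * v.

Definition rankine_hugoniot (cv sigma ra va pa rb vb pb : R) : Prop :=
  sigma * (cons_mass ra va pa - cons_mass rb vb pb) = flux_mass ra va pa - flux_mass rb vb pb /\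
  sigma * (cons_mom ra va pa - cons_mom rb vb pb) = flux_mom ra va pa - flux_mom rb vb pb /\
  sigma * (cons_en cv ra va pa - cons_en cv rb vb pb) = flux_en cv ra va pa - flux_en cv rb vb pb.

Definition admissible_1shock (cv sigma rl vl pl rr vr pr : R) : Prop :=
  rankine_hugoniot cv sigma rl vl pl rr vr pr /\
  vr - sound cv rr pr < sigma < vl - sound cv rl pl.

Definition admissible_3shock (cv sigma rl vl pl rr vr pr : R) : Prop :=
  rankine_hugoniot cv sigma rl vl pl rr vr pr /\
  vr + sound cv rr pr < sigma < vl + sound cv rl pl.

Section Mus.
Variables (rm vm pm rp vp pp rMm rMp : R).
(* rm = rho_-, vm = v_-, pm = p_-, rp = rho_+, ..., rMm = rho_{M-}, rMp = rho_{M+} *)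

Definition A_eps (e : R) : R :=
  rm * (rMm + e) * (rMp - e - rp) - rp * (rMp - e) * (rMm + e - rm).

Definition B_eps (e : R) : R :=
  rm * rp * (rMm + e) * (rMp - e) * (vm - vp) ^ 2 - (pm - pp) * A_eps e.

Definition D_eps (e : R) : R :=
  vm * rm * (rMm + e) * (rMp - e - rp) - vp * rp * (rMp - e) * (rMm + e - rm).

Definition mu0 (e : R) : R :=
  / A_eps e * (D_eps e + rm * rp * (rMp - e) * (vm - vp)
    - sqrt ((rMm + e) ^ 2 * ((rMp - e - rp) / (rMm + e - rm)) * B_eps e)).

Definition mu1 (e : R) : R :=
  / A_eps e * (D_eps e - sqrt ((rMm + e - rm) * (rMp - e - rp) * B_eps e)).

Definition mu2 (e : R) : R :=
  / A_eps e * (D_eps e + rm * rp * (rMm + e) * (vm - vp)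
    - sqrt ((rMp - e) ^ 2 * ((rMm + e - rm) / (rMp - e - rp)) * B_eps e)).
End Mus.

(* Main.v *)
Require Import Defs.
From Stdlib Require Import Reals Lra.
From Coquelicot Require Import Coquelicot.
Open Scope R_scope.

Definition C0f rm vm pm rp vp pp rMm rMp e :=
  rm*((rMm+e)*(rMm+e-rm)*(rMp-e-rp) - rm*rp*(rMp-e))*vm^2 + 2*rm*rp*(rMm+e)*(rMp-e)*vm*vp
  - rp*(rMm+e)^2*(rMp-e)*vp^2 + (rMm+e)^2*(rMp-e-rp)*(pm-pp).
Definition Den0 rm vm pm rp vp pp rMm rMp e :=
  (rMm+e-rm) * (D_eps rm vm rp vp rMm rMp e + rm * rp * (rMp - e) * (vm - vp)
    + sqrt ((rMm + e) ^ 2 * ((rMp - e - rp) / (rMm + e - rm)) * B_eps rm vm pm rp vp pp rMm rMp e)).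
Definition C1f rm vm pm rp vp pp rMm rMp e :=
  vm^2*rm*(rMm+e)*(rMp-e-rp) - vp^2*rp*(rMp-e)*(rMm+e-rm) + (rMm+e-rm)*(rMp-e-rp)*(pm-pp).
Definition Den1 rm vm pm rp vp pp rMm rMp e :=
  D_eps rm vm rp vp rMm rMp e + sqrt ((rMm + e - rm) * (rMp - e - rp) * B_eps rm vm pm rp vp pp rMm rMp e).
Definition C2f rm vm pm rp vp pp rMm rMp e :=
  - (rp*((rMp-e)*(rMm+e-rm)*(rMp-e-rp) - rp*rm*(rMm+e))*vp^2 + 2*rp*rm*(rMp-e)*(rMm+e)*vp*vm
  - rm*(rMp-e)^2*(rMm+e)*vm^2 + (rMp-e)^2*(rMm+e-rm)*(pp-pm)).
Definition Den2 rm vm pm rp vp pp rMm rMp e :=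
  (rMp-e-rp) * (D_eps rm vm rp vp rMm rMp e + rm * rp * (rMm + e) * (vm - vp)
    + sqrt ((rMp - e) ^ 2 * ((rMm + e - rm) / (rMp - e - rp)) * B_eps rm vm pm rp vp pp rMm rMp e)).

Lemma mu0_eq rm vm pm rp vp pp rMm rMp e :
  A_eps rm rp rMm rMp e <> 0 -> B_eps rm vm pm rp vp pp rMm rMp e > 0 ->
  rMp - e - rp > 0 -> rMm + e - rm > 0 -> 0 < Den0 rm vm pm rp vp pp rMm rMp e ->
  mu0 rm vm pm rp vp pp rMm rMp e = C0f rm vm pm rp vp pp rMm rMp e / Den0 rm vm pm rp vp pp rMm rMp e.
Proof.
intros HA HB Hb Ha Hd. unfold mu0. unfold Den0 in *.
set (S := sqrt _) in *.
assert (HS : S * S = (rMm + e) ^ 2 * ((rMp - e - rp) / (rMm + e - rm)) * B_eps rm vm pm rp vp pp rMm rMp e).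
{ apply sqrt_sqrt. apply Rmult_le_pos; [|lra]. apply Rmult_le_pos.
  apply pow2_ge_0. apply Rlt_le, Rdiv_lt_0_compat; lra. }
set (F := D_eps _ _ _ _ _ _ e + _) in *.
assert (HC : C0f rm vm pm rp vp pp rMm rMp e = (rMm+e-rm)*(F*F - S*S) / A_eps rm rp rMm rMp e).
{ rewrite HS. unfold F, C0f, B_eps, D_eps. unfold A_eps in HA |- *. field. split; lra. }
rewrite HC. field. repeat split; auto; [intro H0; rewrite H0 in Hd; lra | lra].
Qed.

Lemma mu1_eq rm vm pm rp vp pp rMm rMp e :
  A_eps rm rp rMm rMp e <> 0 -> B_eps rm vm pm rp vp pp rMm rMp e > 0 ->
  rMp - e - rp > 0 -> rMm + e - rm > 0 -> 0 < Den1 rm vm pm rp vp pp rMm rMp e ->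
  mu1 rm vm pm rp vp pp rMm rMp e = C1f rm vm pm rp vp pp rMm rMp e / Den1 rm vm pm rp vp pp rMm rMp e.
Proof.
intros HA HB Hb Ha Hd. unfold mu1. unfold Den1 in *.
set (S := sqrt _) in *.
assert (HS : S * S = (rMm + e - rm) * (rMp - e - rp) * B_eps rm vm pm rp vp pp rMm rMp e).
{ apply sqrt_sqrt. apply Rmult_le_pos; [|lra]. apply Rmult_le_pos; lra. }
set (F := D_eps _ _ _ _ _ _ e) in *.
assert (HC : C1f rm vm pm rp vp pp rMm rMp e = (F*F - S*S) / A_eps rm rp rMm rMp e).
{ rewrite HS. unfold F, C1f, B_eps, D_eps, A_eps. field. unfold A_eps in HA. auto. }
rewrite HC. field. split; auto. lra.
Qed.

Lemma mu2_eq rm vm pm rp vp pp rMm rMp e :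
  A_eps rm rp rMm rMp e <> 0 -> B_eps rm vm pm rp vp pp rMm rMp e > 0 ->
  rMp - e - rp > 0 -> rMm + e - rm > 0 -> 0 < Den2 rm vm pm rp vp pp rMm rMp e ->
  mu2 rm vm pm rp vp pp rMm rMp e = C2f rm vm pm rp vp pp rMm rMp e / Den2 rm vm pm rp vp pp rMm rMp e.
Proof.
intros HA HB Hb Ha Hd. unfold mu2. unfold Den2 in *.
set (S := sqrt _) in *.
assert (HS : S * S = (rMp - e) ^ 2 * ((rMm + e - rm) / (rMp - e - rp)) * B_eps rm vm pm rp vp pp rMm rMp e).
{ apply sqrt_sqrt. apply Rmult_le_pos; [|lra]. apply Rmult_le_pos.
  apply pow2_ge_0. apply Rlt_le, Rdiv_lt_0_compat; lra. }
set (F := D_eps _ _ _ _ _ _ e + _) in *.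
assert (HC : C2f rm vm pm rp vp pp rMm rMp e = (rMp-e-rp)*(F*F - S*S) / A_eps rm rp rMm rMp e).
{ rewrite HS. unfold F, C2f, B_eps, D_eps. unfold A_eps in HA |- *. field. split; lra. }
rewrite HC. field. repeat split; auto; [intro H0; rewrite H0 in Hd; lra | lra].
Qed.
Lemma key (mu den C : R -> R) (emax target : R) :
  emax > 0 ->
  (forall e, 0 < e <= emax -> 0 < den e -> mu e = C e / den e) ->
  continuous den 0 -> continuous C 0 -> 0 < den 0 -> C 0 / den 0 = target ->
  filterlim mu (at_right 0) (locally target).
Proof.
intros Hem Heq Hd Hc Hd0 Ht.
assert (Hg : continuous (fun e => C e / den e) 0).
{ apply (continuous_mult C (fun e => / den e)); auto.
  apply continuous_Rinv_comp; auto; lra. }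
assert (Hev : locally 0 (fun e => 0 < den e)).
{ apply Hd. exists (mkposreal _ Hd0). intros y Hy.
  unfold ball in Hy; simpl in Hy; unfold AbsRing_ball, abs, minus, plus, opp in Hy; simpl in Hy.
  apply Rabs_def2 in Hy. lra. }
apply (filterlim_ext_loc (fun e => C e / den e)).
- destruct Hev as [d Hd'].
  exists (mkposreal _ (Rmin_pos _ _ (cond_pos d) Hem)). intros y Hy Hy0.
  simpl in Hy. unfold ball in Hy; simpl in Hy; unfold AbsRing_ball, abs, minus, plus, opp in Hy; simpl in Hy.
  apply Rabs_def2 in Hy.
  assert (y < Rmin d emax) by lra.
  pose proof (Rmin_l d emax). pose proof (Rmin_r d emax).
  symmetry; apply Heq. lra. apply Hd'.
  unfold ball; simpl; unfold AbsRing_ball, abs, minus, plus, opp; simpl.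
  apply Rabs_def1; lra.
- rewrite <- Ht. apply (filterlim_filter_le_1 (F := locally 0)). apply filter_le_within. exact Hg.
Qed.

Lemma exd_cont (f : R -> R) x : ex_derive f x -> continuous f x.
Proof. intro H. exact (ex_derive_continuous f x H). Qed.

Lemma cont_den (f g h : R -> R) x : ex_derive f x -> ex_derive g x -> ex_derive h x ->
  continuous (fun e => f e * (g e + sqrt (h e))) x.
Proof.
intros Hf Hg Hh.
apply (continuous_mult f (fun e => g e + sqrt (h e))).
apply exd_cont; auto.
apply (continuous_plus g (fun e => sqrt (h e))).
apply exd_cont; auto.
apply continuous_sqrt_comp. apply exd_cont; auto.
Qed.

Lemma cont_den1 (g h : R -> R) x : ex_derive g x -> ex_derive h x ->
  continuous (fun e => g e + sqrt (h e)) x.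
Proof.
intros Hg Hh.
apply (continuous_plus g (fun e => sqrt (h e))).
apply exd_cont; auto.
apply continuous_sqrt_comp. apply exd_cont; auto.
Qed.

Theorem proposition5p2
  (cv rm vm pm rp vp pp rMm rMp vM pM sm sp emax : R)
  (Hcv : cv > /2)
  (Hrm : rm > 0) (Hpm : pm > 0) (Hrp : rp > 0) (Hpp : pp > 0)
  (H1 : admissible_1shock cv sm rm vm pm rMm vM pM)
  (H3 : admissible_3shock cv sp rMp vM pM rp vp pp)
  (HpM : pM > Rmax pm pp) (HrMm : rMm > rm) (HrMp : rMp > rp)
  (HvM : vM = 0)
  (Hemax : emax > 0)
  (Heps : forall e, 0 < e <= emax ->
     A_eps rm rp rMm rMp e <> 0 /\
     B_eps rm vm pm rp vp pp rMm rMp e > 0 /\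
     rMp - e - rp > 0 /\ rMm + e - rm > 0) :
  filterlim (mu0 rm vm pm rp vp pp rMm rMp) (at_right 0) (locally sm) /\
  filterlim (mu1 rm vm pm rp vp pp rMm rMp) (at_right 0) (locally vM) /\
  filterlim (mu2 rm vm pm rp vp pp rMm rMp) (at_right 0) (locally sp).
Proof.
subst vM.
destruct H1 as [[Hm1 [Hm2 _]] [_ Hl1]].
destruct H3 as [[Hp1 [Hp2 _]] [Hl3 _]].
unfold cons_mass, cons_mom, flux_mass, flux_mom in *.
pose proof (sqrt_pos (gamma_cv cv * pm / rm)) as Sq1.
pose proof (sqrt_pos (gamma_cv cv * pp / rp)) as Sq3.
unfold sound in Hl1, Hl3.
assert (Hm1' : sm * (rm - rMm) = rm * vm) by lra.
assert (Hp1' : sp * (rMp - rp) = - rp * vp) by lra.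
assert (Hvs : vm > sm) by lra.
assert (Hvs3 : vp < sp) by lra.
assert (Hsm : sm < 0).
{ destruct (Rlt_or_le sm 0) as [h|h]; auto.
  assert (0 <= sm * (rMm - rm)) by (apply Rmult_le_pos; lra). nra. }
assert (Hsp : sp > 0).
{ destruct (Rlt_or_le 0 sp) as [h|h]; auto.
  assert (0 <= (- sp) * (rMp - rp)) by (apply Rmult_le_pos; lra). nra. }
assert (Hvm : vm > 0) by nra.
assert (Hvp : vp < 0) by nra.
assert (Epm : pm = pM + sm*rm*vm - rm*vm^2) by nra.
assert (Epp : pp = pM + sp*rp*vp - rp*vp^2) by nra.
assert (Evm : vm = sm*(rm-rMm)/rm) by (unfold Rdiv; rewrite Hm1'; field; lra).
assert (Evp : vp = - sp*(rMp-rp)/rp) by (unfold Rdiv; replace (- sp * (rMp - rp)) with (rp * vp) by lra; field; lra).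
set (KK := D_eps rm vm rp vp rMm rMp 0).
assert (HKK : 0 < KK).
{ unfold KK, D_eps.
  assert (0 < vm*rm*rMm*(rMp-rp)) by (repeat apply Rmult_lt_0_compat; lra).
  assert (0 < (-vp)*rp*rMp*(rMm-rm)) by (repeat apply Rmult_lt_0_compat; lra).
  lra. }
assert (HW : 0 < rm*rp*(vm-vp)) by (repeat apply Rmult_lt_0_compat; lra).
clear Hm1 Hm2 Hp1 Hp2 Hl1 Hl3 Sq1 Sq3 Hm1' Hp1'.
split; [|split].
-
  assert (Hs : sqrt ((rMm + 0) ^ 2 * ((rMp - 0 - rp) / (rMm + 0 - rm)) * B_eps rm vm pm rp vp pp rMm rMp 0)
           = rMm * KK / (rMm - rm)).
  { rewrite <- (sqrt_Rsqr (rMm * KK / (rMm - rm))).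
    2: { apply Rlt_le, Rdiv_lt_0_compat; [apply Rmult_lt_0_compat|]; lra. }
    f_equal. unfold KK, Rsqr, B_eps, A_eps, D_eps. subst pm pp. subst vm vp. field. lra. }
  assert (Hd0 : 0 < Den0 rm vm pm rp vp pp rMm rMp 0).
  { unfold Den0. rewrite Hs. apply Rmult_lt_0_compat; [lra|].
    fold KK. assert (0 < rMm * KK / (rMm - rm)) by
      (apply Rdiv_lt_0_compat; [apply Rmult_lt_0_compat|]; lra).
    assert (0 < rm * rp * (vm - vp) * (rMp - 0)) by (apply Rmult_lt_0_compat; lra).
    nra. }
  apply (key _ (Den0 rm vm pm rp vp pp rMm rMp) (C0f rm vm pm rp vp pp rMm rMp) emax); auto.
  + intros e He Hd. destruct (Heps e He) as [HA [HB [Hb Ha]]]. apply mu0_eq; auto.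
  + unfold Den0, D_eps, B_eps, A_eps. apply cont_den; auto_derive; auto; lra.
  + apply exd_cont. unfold C0f. auto_derive; auto.
  + assert (Hne : Den0 rm vm pm rp vp pp rMm rMp 0 <> 0) by lra.
    unfold Rdiv. apply (Rmult_eq_reg_r (Den0 rm vm pm rp vp pp rMm rMp 0)); [|exact Hne].
    rewrite Rmult_assoc, Rinv_l, Rmult_1_r by exact Hne.
    unfold Den0. rewrite Hs. unfold KK, C0f, D_eps. subst pm pp. subst vm vp. field. lra.
-
  assert (Hs : sqrt ((rMm + 0 - rm) * (rMp - 0 - rp) * B_eps rm vm pm rp vp pp rMm rMp 0) = KK).
  { rewrite <- (sqrt_Rsqr KK) by lra.
    f_equal. unfold KK, Rsqr, B_eps, A_eps, D_eps. subst pm pp. subst vm vp. field. lra. }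
  assert (Hd0 : 0 < Den1 rm vm pm rp vp pp rMm rMp 0).
  { unfold Den1. rewrite Hs. fold KK. lra. }
  apply (key _ (Den1 rm vm pm rp vp pp rMm rMp) (C1f rm vm pm rp vp pp rMm rMp) emax); auto.
  + intros e He Hd. destruct (Heps e He) as [HA [HB [Hb Ha]]]. apply mu1_eq; auto.
  + unfold Den1, D_eps, B_eps, A_eps. apply cont_den1; auto_derive; auto; lra.
  + apply exd_cont. unfold C1f. auto_derive; auto.
  + assert (HC : C1f rm vm pm rp vp pp rMm rMp 0 = 0).
    { unfold C1f. subst pm pp. subst vm vp. field. lra. }
    rewrite HC. unfold Rdiv. ring.
-
  assert (Hs : sqrt ((rMp - 0) ^ 2 * ((rMm + 0 - rm) / (rMp - 0 - rp)) * B_eps rm vm pm rp vp pp rMm rMp 0)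
           = rMp * KK / (rMp - rp)).
  { rewrite <- (sqrt_Rsqr (rMp * KK / (rMp - rp))).
    2: { apply Rlt_le, Rdiv_lt_0_compat; [apply Rmult_lt_0_compat|]; lra. }
    f_equal. unfold KK, Rsqr, B_eps, A_eps, D_eps. subst pm pp. subst vm vp. field. lra. }
  assert (Hd0 : 0 < Den2 rm vm pm rp vp pp rMm rMp 0).
  { unfold Den2. rewrite Hs. apply Rmult_lt_0_compat; [lra|].
    fold KK. assert (0 < rMp * KK / (rMp - rp)) by
      (apply Rdiv_lt_0_compat; [apply Rmult_lt_0_compat|]; lra).
    assert (0 < rm * rp * (vm - vp) * (rMm + 0)) by (apply Rmult_lt_0_compat; lra).
    nra. }
  apply (key _ (Den2 rm vm pm rp vp pp rMm rMp) (C2f rm vm pm rp vp pp rMm rMp) emax); auto.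
  + intros e He Hd. destruct (Heps e He) as [HA [HB [Hb Ha]]]. apply mu2_eq; auto.
  + unfold Den2, D_eps, B_eps, A_eps. apply cont_den; auto_derive; auto; lra.
  + apply exd_cont. unfold C2f. auto_derive; auto.
  + assert (Hne : Den2 rm vm pm rp vp pp rMm rMp 0 <> 0) by lra.
    unfold Rdiv. apply (Rmult_eq_reg_r (Den2 rm vm pm rp vp pp rMm rMp 0)); [|exact Hne].
    rewrite Rmult_assoc, Rinv_l, Rmult_1_r by exact Hne.
    unfold Den2. rewrite Hs. unfold KK, C2f, D_eps. subst pm pp. subst vm vp. field. lra.
Qed.
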